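(* Let $G$ be a strongly contracting group. Then $\mathrm{WP}_G\in\mathrm{DTIME}_*(n)$.
   Context: Automaton groups: an invertible, minimal automaton $A=(S,X,t,o)$ over a finite alphabet $X$ with state set $S$ closed under inversion generates the group $G_A$ of transformations $o(s,\cdot)$ of $X^{*}$; for a word $w\in S^{*}$ and $x\in X$, the section $w|_x\in S^{*}$ is the word of the same length obtained by running the dual automaton: $(s_1\cdots s_n)|_x=s_1'\cdots s_n'$ with $s_i'=t(s_i,x_i)$, $x_1=x$, $x_{i+1}=o(s_i,x_i)$. $l_S$ denotes word length in $G$ w.r.t. $S$. The automaton group is strongly contracting (for that automaton) if $\sum_{x\in X} l_S(w|_x)<|w|$ for all sufficiently long words $w\in S^{*}$; a group is strongly contracting if it is so for some automaton representation. $\mathrm{DTIME}_*(n)$ is the class of languages decided in linear time by a deterministic multi-tape Turing machine. *)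

(* Defs.v *)
From mathcomp Require Import all_boot.
From mathcomp Require Import boolp.
Set Implicit Arguments. Unset Strict Implicit. Unset Printing Implicit Defensive.

Section Automaton.
Variables (S X : finType) (t : S -> X -> S) (o : S -> X -> X).

Fixpoint aut_act (s : S) (u : seq X) : seq X :=
  match u with [::] => [::] | x :: u' => o s x :: aut_act (t s x) u' end.

(* action of a word s1...sn : s1 acts first (left-to-right), matching the
   convention used for sections via the dual automaton *)
Definition word_act (w : seq S) (u : seq X) : seq X :=
  foldl (fun v s => aut_act s v) u w.

Definition same_elt (w v : seq S) : Prop := forall u, word_act w u = word_act v u.

Fixpoint section (w : seq S) (x : X) : seq S :=
  match w with [::] => [::] | s :: w' => t s x :: section w' (o s x) end.

Definition invertible_aut : Prop := forall s, injective (o s).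
Definition minimal_aut : Prop :=
  forall s s', (forall u, aut_act s u = aut_act s' u) -> s = s'.
Definition closed_under_inversion : Prop :=
  forall s, exists s', forall u, aut_act s' (aut_act s u) = u /\ aut_act s (aut_act s' u) = u.

Lemma word_len_ex (w : seq S) :
  exists n, `[< exists v : seq S, size v = n /\ same_elt v w >].
Proof. by exists (size w); apply/asboolP; exists w. Qed.
Definition word_len (w : seq S) : nat := ex_minn (word_len_ex w).

Definition strongly_contracting_aut : Prop :=
  exists N, forall w : seq S, N <= size w ->
    \sum_(x : X) word_len (section w x) < size w.

Definition word_problem (w : seq S) : Prop := forall u, word_act w u = u.
End Automaton.

Inductive move := MoveL | MoveR | Stay.

Section TM.
Variable Sigma : finType.

Record TM := {
  tm_k : nat;                 (* tm_k.+1 tapes; tape 0 holds the input *)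
  tm_Q : finType;
  tm_W : finType;
  tm_start : tm_Q;
  tm_accept : tm_Q -> bool;
  (* tape alphabet: option (Sigma + W), None = blank; None = halt *)
  tm_delta : tm_Q -> ('I_tm_k.+1 -> option (Sigma + tm_W)) ->
     option (tm_Q * ('I_tm_k.+1 -> option (Sigma + tm_W)) * ('I_tm_k.+1 -> move))
}.

Variable M : TM.
Definition sym := option (Sigma + tm_W M).
(* tape zipper: reversed left part, scanned cell, right part *)
Definition tape := (seq sym * sym * seq sym)%type.

Definition tape_move (m : move) (tp : tape) : tape :=
  let: (l, a, r) := tp in
  match m with
  | Stay => tp
  | MoveL => match l with [::] => ([::], None, a :: r) | b :: l' => (l', b, a :: r) end
  | MoveR => match r with [::] => (a :: l, None, [::]) | b :: r' => (a :: l, b, r') end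
  end.

Definition config := (tm_Q M * ('I_(tm_k M).+1 -> tape))%type.

Definition tm_step (c : config) : config :=
  let: (q, tps) := c in
  match tm_delta q (fun i => (tps i).1.2) with
  | None => c
  | Some (q', wr, mv) =>
      (q', fun i => let: (l, _, r) := tps i in tape_move (mv i) (l, wr i, r))
  end.

Definition halted (c : config) : bool :=
  if tm_delta c.1 (fun i => (c.2 i).1.2) is None then true else false.

Definition init_config (w : seq Sigma) : config :=
  (tm_start M, fun i =>
     if val i == 0 then
       match [seq Some (inl s) | s <- w] : seq sym with
       | [::] => ([::], None, [::]) | a :: r => ([::], a, r) end
     else ([::], None, [::])).

Definition decides_in_time (L : seq Sigma -> Prop) (f : nat -> nat) : Prop :=
  forall w, exists n, n <= f (size w) /\
    let c := iter n tm_step (init_config w) in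
    halted c /\ (tm_accept c.1 <-> L w).
End TM.

Definition DTIME_lin (Sigma : finType) (L : seq Sigma -> Prop) : Prop :=
  exists (M : TM Sigma) (c : nat), decides_in_time M L (fun n => c * n + c).

(* Main.v *)
From HB Require Import structures.
Require Import Defs.
From mathcomp Require Import all_boot.
From mathcomp Require Import boolp zify.
From Stdlib Require Import Lia.
Set Implicit Arguments. Unset Strict Implicit. Unset Printing Implicit Defensive.


Section Grp.
Variables (S X : finType) (t : S -> X -> S) (o : S -> X -> X).

Fixpoint pact (w : seq S) (x : X) : X :=
  match w with [::] => x | s :: w' => pact w' (o s x) end.

Local Notation wact := (word_act t o).
Local Notation sec := (section t o).

Lemma word_act_nil w : wact w [::] = [::].
Proof. by elim: w => //= s w IH; rewrite /word_act /= -/(wact w [::]). Qed.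

Lemma word_act_cons w x u :
  wact w (x :: u) = pact w x :: wact (sec w x) u.
Proof.
elim: w x u => [//|s w IH] x u.
rewrite /word_act /=. rewrite -/(wact w _) -/(wact (sec w _) _). by rewrite IH.
Qed.

Lemma word_act_cat u v z : wact (u ++ v) z = wact v (wact u z).
Proof. by rewrite /word_act foldl_cat. Qed.

Lemma section_cat u v x : sec (u ++ v) x = sec u x ++ sec v (pact u x).
Proof. by elim: u x => //= s u IH x; rewrite IH. Qed.

Lemma pact_cat u v x : pact (u ++ v) x = pact v (pact u x).
Proof. by elim: u x => //= s u IH x. Qed.

Lemma size_section w x : size (sec w x) = size w.
Proof. by elim: w x => //= s w IH x; rewrite IH. Qed.

Lemma wp_iff w : word_problem t o w <->
  (forall x, pact w x = x) /\ forall x, word_problem t o (sec w x).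
Proof.
split.
  move=> H; split=> [x|x u].
    by have := H [:: x]; rewrite word_act_cons => -[].
  by have := H (x :: u); rewrite word_act_cons => -[].
move=> [H1 H2] [|x u]; first by rewrite word_act_nil.
by rewrite word_act_cons H1 H2.
Qed.

Lemma same_elt_cat a a' b b' : same_elt t o a a' -> same_elt t o b b' ->
  same_elt t o (a ++ b) (a' ++ b').
Proof. by move=> Ha Hb u; rewrite !word_act_cat Ha Hb. Qed.

Lemma wp_same w v : same_elt t o w v -> word_problem t o w <-> word_problem t o v.
Proof. by move=> H; split=> W u; [rewrite -H | rewrite H]. Qed.

Lemma pact_inj w : invertible_aut o -> injective (pact w).
Proof. by move=> Hi; elim: w => //= s w IH x y /IH /Hi. Qed.

Lemma geo_ex w : exists v, size v = word_len t o w /\ same_elt t o v w.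
Proof.
rewrite /word_len; case: ex_minnP => n /asboolP [v [Hv Hs]] _.
by exists v.
Qed.

Definition geo w : seq S := projT1 (cid (geo_ex w)).
Lemma geo_size w : size (geo w) = word_len t o w.
Proof. by rewrite /geo; case: cid => v [] . Qed.
Lemma geo_same w : same_elt t o (geo w) w.
Proof. by rewrite /geo; case: cid => v [] . Qed.

Lemma word_len_le w : word_len t o w <= size w.
Proof.
rewrite /word_len; case: ex_minnP => n _ Hm; apply: Hm.
by apply/asboolP; exists w.
Qed.

End Grp.


Section Sweep.
Variables (S X : finType) (t : S -> X -> S) (o : S -> X -> X).
Variable N : nat.
Local Notation sec := (section t o).
Local Notation pa := (pact o).
Local Notation gf := (geo t o).

Fixpoint sout (y : X) (b : seq S) (v : seq S) : seq S :=
  match v with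
  | [::] => sec b y
  | s :: v' => if size (rcons b s) == N then gf (sec (rcons b s) y) ++ sout (pa (rcons b s) y) [::] v'
               else sout y (rcons b s) v'
  end.

Fixpoint send (y : X) (b : seq S) (v : seq S) : X :=
  match v with
  | [::] => pa b y
  | s :: v' => if size (rcons b s) == N then send (pa (rcons b s) y) [::] v'
               else send y (rcons b s) v'
  end.

Fixpoint ssteps (y : X) (b : seq S) (v : seq S) : nat :=
  match v with
  | [::] => (size (sec b y)).+2
  | s :: v' => if size (rcons b s) == N then
                 (size (gf (sec (rcons b s) y))).+2 + ssteps (pa (rcons b s) y) [::] v'
               else (ssteps y (rcons b s) v').+1
  end.

Lemma sout_same y b v : same_elt t o (sout y b v) (sec (b ++ v) y).
Proof.
elim: v y b => [|s v IH] y b /=; first by rewrite cats0.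
rewrite -cat_rcons; case: ifP => _; last exact: IH.
rewrite section_cat; apply: same_elt_cat; first exact: geo_same.
exact: IH.
Qed.

Lemma send_pact y b v : send y b v = pa (b ++ v) y.
Proof.
elim: v y b => [|s v IH] y b /=; first by rewrite cats0.
by rewrite -cat_rcons; case: ifP => _; rewrite IH ?pact_cat.
Qed.

Lemma ssteps_le y b v : ssteps y b v <= 2 * size v + size (sout y b v) + 2.
Proof.
elim: v y b => [|s v IH] y b /=; first lia.
case: ifP => _.
  rewrite size_cat; have := IH (pa (rcons b s) y) [::]; lia.
have := IH y (rcons b s); lia.
Qed.

Hypothesis Hinv : invertible_aut o.
Hypothesis HN : 0 < N.
Hypothesis Hsc : forall w : seq S, N <= size w -> \sum_(x : X) word_len t o (sec w x) < size w.

Lemma geo_small b y : size b = N -> size (gf (sec b y)) < N.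
Proof.
move=> Hb; rewrite geo_size; have := Hsc (eq_leq (esym Hb)); rewrite Hb.
apply: leq_ltn_trans; rewrite (bigD1 y) //=; exact: leq_addr.
Qed.

Lemma sout_bound v b (f : X -> X) : injective f -> size b < N ->
  \sum_(x : X) size (sout (f x) b v) <=
    (N - 1) * ((size b + size v) %/ N) + #|X| * ((size b + size v) %% N).
Proof.
elim: v b f => [|s v IH] b f Hf Hb /=.
  rewrite addn0 divn_small // modn_small // muln0 add0n.
  under eq_bigr => x _ do rewrite size_section.
  by rewrite sum_nat_const.
case Hfull: (size (rcons b s) == N).
  under eq_bigr => x _ do rewrite size_cat geo_size.
  rewrite big_split /=.
  have H1 : \sum_(x : X) word_len t o (sec (rcons b s) (f x)) <= N - 1.
    have -> : \sum_(x : X) word_len t o (sec (rcons b s) (f x)) =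
              \sum_(y : X) word_len t o (sec (rcons b s) y).
      by rewrite [in RHS](reindex_inj Hf).
    have := Hsc (eq_leq (esym (eqP Hfull))); rewrite (eqP Hfull).
    move: (\sum_(y : X) _) => A; lia.
  have Hf' : injective (fun x => pa (rcons b s) (f x)).
    by move=> x y /(pact_inj Hinv) /Hf.
  have := IH [::] _ Hf' HN; rewrite /= add0n => H2.
  have -> : size b + (size v).+1 = N + size v.
    by rewrite -(eqP Hfull) size_rcons addSnnS.
  rewrite divnDl // divnn modnDl.
  move: H1 H2; move: (\sum_(x : X) word_len _ _ _) (\sum_(x : X) size _) => A B H1 H2.
  rewrite HN mulnDr muln1 -addnA.
  by apply: leq_add.
have Hb' : size (rcons b s) < N.
  by rewrite ltn_neqAle Hfull size_rcons Hb.
have := IH _ f Hf Hb'; rewrite size_rcons addSnnS //.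
Qed.

End Sweep.


Inductive Q (n : nat) (X B : Type) :=
 | QI0 | QI1 | QIR | QPS
 | QPop of option B
 | QPush of 'I_n
 | QSw of 'I_n & X & B
 | QEm of 'I_n & X & B & bool
 | QRw of 'I_n
 | QHalt of bool.
Arguments QI0 {n X B}. Arguments QI1 {n X B}. Arguments QIR {n X B}. Arguments QPS {n X B}.
Arguments QPop {n X B}. Arguments QPush {n X B}. Arguments QSw {n X B}. Arguments QEm {n X B}.
Arguments QRw {n X B}. Arguments QHalt {n X B}.

Section QFin.
Variables (n : nat) (X B : finType).
Definition Qenc (q : Q n X B) :
  ('I_4 + option B) + (('I_n + ('I_n * X * B)) + (('I_n * X * B * bool) + 'I_n)) + bool :=
  match q with
  | QI0 => inl (inl (inl (@Ordinal 4 0 isT)))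
  | QI1 => inl (inl (inl (@Ordinal 4 1 isT)))
  | QIR => inl (inl (inl (@Ordinal 4 2 isT)))
  | QPS => inl (inl (inl (@Ordinal 4 3 isT)))
  | QPop ob => inl (inl (inr ob))
  | QPush j => inl (inr (inl (inl j)))
  | QSw j x b => inl (inr (inl (inr (j, x, b))))
  | QEm j x b f => inl (inr (inr (inl (j, x, b, f))))
  | QRw j => inl (inr (inr (inr j)))
  | QHalt b => inr b
  end.
Definition Qdec (e : ('I_4 + option B) + (('I_n + ('I_n * X * B)) + (('I_n * X * B * bool) + 'I_n)) + bool)
  : Q n X B :=
  match e with
  | inl (inl (inl i)) => match val i with 0 => QI0 | 1 => QI1 | 2 => QIR | _ => QPS end
  | inl (inl (inr ob)) => QPop ob
  | inl (inr (inl (inl j))) => QPush j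
  | inl (inr (inl (inr (j, x, b)))) => QSw j x b
  | inl (inr (inr (inl (j, x, b, f)))) => QEm j x b f
  | inl (inr (inr (inr j))) => QRw j
  | inr b => QHalt b
  end.
Lemma QencK : cancel Qenc Qdec. Proof. by case. Qed.
HB.instance Definition _ := Finite.copy (Q n X B) (can_type QencK).
End QFin.

Arguments tape_move {Sigma M} m tp : simpl never.

Section Machine.
Variables (S X : finType) (t : S -> X -> S) (o : S -> X -> X) (N K : nat).
Local Notation sec := (section t o).
Local Notation pa := (pact o).
Local Notation gf := (geo t o).

Fixpoint allw (n : nat) : seq (seq S) :=
  match n with 0 => [:: [::]] | n'.+1 => [::] :: [seq s :: w | s <- enum S, w <- allw n'] end.

Lemma mem_allw n w : (w \in allw n) = (size w <= n).
Proof.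
elim: n w => [|n IH] [|s w] //=.
rewrite in_cons /= ltnS -IH; apply/allpairsP/idP => [[[a b] [_ Hb /= E]]|Hw].
  by case: E => _ ->.
by exists (s, w); rewrite mem_enum.
Qed.

Definition BW := seq_sub (allw K).
Lemma nil_allw : [::] \in allw K. Proof. by rewrite mem_allw. Qed.
Definition bnil : BW := @SeqSub _ (allw K) [::] nil_allw.
Definition mkb (w : seq S) : BW := insubd bnil w.
Arguments mkb : simpl never.
Lemma mkbK w : size w <= K -> val (mkb w) = w.
Proof. by move=> H; rewrite /mkb insubdK // -topredE /= mem_allw. Qed.

Definition Qt := Q #|X| X BW.
Definition sym := option (S + bool).
Definition hash : sym := Some (inr true).
Definition ltm : sym := Some (inr false).
Definition letter (s : S) : sym := Some (inl s).
Definition xj (j : 'I_#|X|) : X := enum_val j.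
Definition tb (v : seq S) : bool := `[< word_problem t o v >].

Definition after_pop (ob : option BW) : Qt :=
  match ob with
  | Some b => if tb (val b) then QPS else QHalt false
  | None => match insub 0 with Some j => QPush j | None => QPS end
  end.

Definition after_rw (j : 'I_#|X|) : Qt :=
  match insub j.+1 with Some j' => QPush j' | None => QPS end.

Definition mydelta (q : Qt) (c0 c1 : sym) : option (Qt * sym * sym * move * move) :=
  match q with
  | QI0 => Some (QI1, c0, c1, MoveL, Stay)
  | QI1 => Some (QIR, hash, c1, MoveR, Stay)
  | QIR => match c0 with
           | Some (inl _) => Some (QIR, c0, c1, MoveR, Stay)
           | _ => Some (QPS, c0, c1, Stay, Stay) end
  | QPS => Some (QPop (Some bnil), c0, None, MoveL, MoveL)
  | QPop ob => match c0 with
           | Some (inl s) => Some (QPop (obind (fun b : BW => insub (s :: val b)) ob), None, c0, MoveL, MoveL)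
           | Some (inr _) => Some (after_pop ob, None, ltm, Stay, Stay)
           | None => Some (QHalt true, c0, c1, Stay, Stay) end
  | QPush j => Some (QSw j (xj j) bnil, hash, c1, MoveR, MoveR)
  | QSw j y b => match c1 with
           | Some (inl s) =>
               if size (rcons (val b) s) == N then
                 Some (QEm j (pa (rcons (val b) s) y) (mkb (gf (sec (rcons (val b) s) y))) false,
                       c0, c1, Stay, MoveR)
               else Some (QSw j y (mkb (rcons (val b) s)), c0, c1, Stay, MoveR)
           | _ => Some (QEm j (pa (val b) y) (mkb (sec (val b) y)) true, c0, c1, Stay, Stay) end
  | QEm j y p fin => match val p with
           | a :: p' => Some (QEm j y (mkb p') fin, letter a, c1, MoveR, Stay)
           | [::] => if fin then
                       (if y == xj j then Some (QRw j, c0, c1, Stay, Stay)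
                        else Some (QHalt false, c0, c1, Stay, Stay))
                     else Some (QSw j y bnil, c0, c1, Stay, Stay) end
  | QRw j => match c1 with
           | Some (inr false) => Some (after_rw j, c0, c1, Stay, Stay)
           | _ => Some (QRw j, c0, c1, Stay, MoveL) end
  | QHalt _ => None
  end.

Definition two (T : Type) (a b : T) : 'I_2 -> T := fun i => if val i == 0 then a else b.

Definition acc (q : Qt) : bool := if q is QHalt b then b else false.

Definition Mach : TM S := {|
  tm_k := 1; tm_Q := Qt; tm_W := bool; tm_start := QI0; tm_accept := acc;
  tm_delta := fun q hs => match mydelta q (hs ord0) (hs ord_max) with
                          | None => None
                          | Some (q', w0, w1, m0, m1) => Some (q', two w0 w1, two m0 m1) end |}.

Definition tp := (seq sym * sym * seq sym)%type.
Definition cfg (q : Qt) (T0 T1 : tp) : config Mach := (q, two T0 T1).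
Definition stp : config Mach -> config Mach := @tm_step S Mach.
Arguments cfg : simpl never.
Arguments stp : simpl never.
Arguments iter : simpl never.

Lemma stepE q (T0 T1 : tp) : stp (cfg q T0 T1) =
  match mydelta q T0.1.2 T1.1.2 with
  | None => cfg q T0 T1
  | Some (q', w0, w1, m0, m1) =>
      cfg q' (@tape_move S Mach m0 (T0.1.1, w0, T0.2)) (@tape_move S Mach m1 (T1.1.1, w1, T1.2)) end.
Proof.
case: T0 => [[l0 a0] r0]; case: T1 => [[l1 a1] r1].
rewrite /stp /tm_step /cfg /=.
case: (mydelta q a0 a1) => [[[[[q' w0] w1] m0] m1]|] //=.
congr pair; apply: funext => i; rewrite /two.
by case: (val i == 0).
Qed.


Definition zr (l xs : seq sym) : tp := (l, head None xs, behead xs).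
Definition zl (xs r : seq sym) : tp := (behead xs, head None xs, r).
Local Notation tmv := (@tape_move S Mach).

Lemma mvR l a r : tmv MoveR (l, a, r) = zr (a :: l) r.
Proof. by case: r. Qed.
Lemma mvL l a r : tmv MoveL (l, a, r) = zl l (a :: r).
Proof. by case: l. Qed.
Lemma mvS (T : tp) : tmv Stay (T.1.1, T.1.2, T.2) = T.
Proof. by case: T => [[]]. Qed.
Lemma mvS' l a r : tmv Stay (l, a, r) = (l, a, r).
Proof. by []. Qed.
Lemma zr_nseq l m : zr l (nseq m None) = (l, None, nseq m.-1 None).
Proof. by case: m. Qed.
Lemma nseq_catS m (R : seq sym) : nseq m None ++ None :: R = nseq m.+1 None ++ R.
Proof. by elim: m => //= m ->. Qed.
Lemma nseq_cat m k : nseq m (None : sym) ++ nseq k None = nseq (m + k) None.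
Proof. by elim: m => //= m ->. Qed.

Lemma init_cfg w : init_config Mach w = cfg QI0 (zr [::] (map letter w)) ([::], None, [::]).
Proof.
rewrite /init_config /cfg; congr pair; apply: funext => i; rewrite /two.
by case: (val i == 0) => //; case: w.
Qed.

Lemma run_init u l rest (T1 : tp) :
  iter (size u) stp (cfg QIR (zr l (map letter u ++ rest)) T1) =
  cfg QIR (zr (rev (map letter u) ++ l) rest) T1.
Proof.
elim: u l => [//|s u IH] l.
rewrite iterSr stepE /= mvR mvS IH.
by rewrite rev_cons cat_rcons.
Qed.

Lemma init_run w : iter (size w).+3 stp (init_config Mach w) =
  cfg QPS (rev (map letter w) ++ [:: hash], None, [::]) ([::], None, [::]).
Proof.
rewrite init_cfg iterS !iterSr.
rewrite stepE /= mvL mvS' stepE /= mvR mvS'.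
have -> : zr [:: hash] (head None (map letter w) :: behead (map letter w)) =
          zr [:: hash] (map letter w ++ [::]) by rewrite cats0.
rewrite run_init stepE /=.
by rewrite mvS'.
Qed.


Definition enc (st : seq (seq S)) : seq sym := flatten [seq hash :: map letter v | v <- st].
Lemma rev_enc_cat st st' : rev (enc (st ++ st')) = rev (enc st') ++ rev (enc st).
Proof. by rewrite /enc map_cat flatten_cat rev_cat. Qed.
Lemma rev_enc1 v : rev (enc [:: v]) = map letter (rev v) ++ [:: hash].
Proof. by rewrite /enc /= cats0 rev_cons map_rev -cats1. Qed.
Lemma rev_enc_cons v st : rev (enc (v :: st)) = rev (enc st) ++ map letter (rev v) ++ [:: hash].
Proof. by rewrite -cat1s rev_enc_cat rev_enc1. Qed.
Lemma rev_enc_rcons st v : rev (enc (rcons st v)) = map letter (rev v) ++ hash :: rev (enc st).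
Proof. by rewrite -cats1 rev_enc_cat rev_enc1 -catA. Qed.

Definition popf (ob : option BW) (u : seq S) : option BW :=
  foldl (fun ob s => obind (fun b : BW => insub (s :: val b)) ob) ob u.

Lemma popf_none u : popf None u = None.
Proof. by elim: u. Qed.

Lemma size_BW (b : BW) : size (val b) <= K.
Proof. by move: (ssvalP b); rewrite mem_allw. Qed.

Lemma popf_some u (b : BW) : omap val (popf (Some b) u) =
  if size u + size (val b) <= K then Some (rev u ++ val b) else None.
Proof.
elim: u b => [|s u IH] b /=; first by rewrite size_BW.
case: insubP => [b' Hin Hval|Hn].
  rewrite IH Hval /= addSnnS rev_cons cat_rcons.
  by [].
rewrite popf_none; have Hn2 : K < (@size S (ssval b)).+1 by rewrite ltnNge -(mem_allw K (s :: val b)); exact: Hn.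
case: ifP => // H; exfalso; move: H Hn2; lia.
Qed.

Lemma pop_loop u ob E R ls rs :
  iter (size u) stp (cfg (QPop ob) (zl (map letter u ++ E) R) (zl ls rs)) =
  cfg (QPop (popf ob u)) (zl E (nseq (size u) None ++ R))
      (zl (drop (size u) ls) (rev (map letter u) ++ rs)).
Proof.
elim: u ob R ls rs => [|s u IH] ob R ls rs; first by rewrite drop0.
rewrite iterSr stepE /= !mvL IH.
rewrite nseq_catS rev_cons cat_rcons.
by case: ls.
Qed.

Lemma pop_word st v m (T1 : tp) :
  iter (size v).+2 stp (cfg QPS (rev (enc (rcons st v)), None, nseq m None) T1) =
  cfg (after_pop (popf (Some bnil) (rev v))) (rev (enc st), None, nseq (size v + m).+1 None)
      (behead (drop (size v) T1.1.1), ltm, map letter v ++ None :: T1.2).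
Proof.
rewrite rev_enc_rcons iterS iterSr stepE /= !mvL.
have := pop_loop (rev v) (Some bnil) (hash :: rev (enc st)) (None :: nseq m None) T1.1.1 (None :: T1.2).
rewrite size_rev => ->.
rewrite stepE /= !mvS' map_rev revK nseq_catS nseq_cat addSn.
by [].
Qed.

Lemma pop_empty m (T1 : tp) : iter 2 stp (cfg QPS ([::], None, nseq m None) T1) =
  cfg (QHalt true) ([::], None, None :: nseq m None) (zl T1.1.1 (None :: T1.2)).
Proof. by rewrite !iterSr stepE /= !mvL stepE /= !mvS'. Qed.


Lemma mkb_nil : mkb [::] = bnil.
Proof. by apply: val_inj; rewrite mkbK. Qed.

Lemma halt_fix n b T0 T1 : iter n stp (cfg (QHalt b) T0 T1) = cfg (QHalt b) T0 T1.
Proof. by elim: n => // n IH; rewrite iterS IH stepE. Qed.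

Lemma emit p j y fin L m (T1 : tp) : size p <= K ->
  iter (size p) stp (cfg (QEm j y (mkb p) fin) (L, None, nseq m None) T1) =
  cfg (QEm j y bnil fin) (rev (map letter p) ++ L, None, nseq (m - size p) None) T1.
Proof.
elim: p L m => [|a p IH] L m Hp; first by rewrite mkb_nil subn0.
rewrite iterSr stepE /= mkbK //= mvR zr_nseq mvS IH; last exact: ltnW.
rewrite rev_cons cat_rcons; congr cfg; congr (_, _, _); congr nseq; lia.
Qed.

Hypothesis HNK : N <= K.
Hypothesis HN : 0 < N.
Hypothesis Hg : forall b y, size b = N -> size (gf (sec b y)) <= K.

Lemma sweep v j y (b : BW) L m lsc rs0 : size (val b) < N ->
  iter (ssteps t o N y (val b) v) stp
       (cfg (QSw j y b) (L, None, nseq m None) (zr lsc (map letter v ++ None :: rs0))) =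
  cfg (if send o N y (val b) v == xj j then QRw j else QHalt false)
      (rev (map letter (sout t o N y (val b) v)) ++ L, None,
       nseq (m - size (sout t o N y (val b) v)) None)
      (rev (map letter v) ++ lsc, None, rs0).
Proof.
elim: v y b L m lsc => [|s v IH] y b L m lsc Hb /=.
  rewrite iterS iterSr stepE /= !mvS' emit; last first.
    by rewrite size_section; apply: leq_trans HNK; exact: ltnW.
  rewrite stepE /=.
  by case: (_ == _); rewrite /= !mvS'.
case Hf: (size (rcons (val b) s) == N).
  rewrite addnC iterD iterS iterSr stepE /= Hf mvS' mvR emit; last exact: Hg (eqP Hf).
  rewrite stepE /= !mvS'.
  have := IH (pa (rcons (val b) s) y) bnil (rev (map letter (gf (sec (rcons (val b) s) y))) ++ L)
    (m - size (gf (sec (rcons (val b) s) y))) (letter s :: lsc) HN.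
  move=> ->.
  rewrite map_cat rev_cat -catA size_cat subnDA rev_cons cat_rcons.
  by [].
have Hr : size (rcons (val b) s) <= K.
  by rewrite size_rcons; apply: leq_trans HNK.
have Hb' : size (val (mkb (rcons (val b) s))) < N.
  by rewrite mkbK // ltn_neqAle Hf size_rcons.
have := IH y (mkb (rcons (val b) s)) L m (letter s :: lsc) Hb'.
rewrite mkbK // => IH'.
by rewrite iterSr stepE /= Hf mvS' mvR IH' rev_cons cat_rcons.
Qed.

Lemma rewind u E R j (T0 : tp) :
  iter (size u) stp (cfg (QRw j) T0 (zl (map letter u ++ E) R)) =
  cfg (QRw j) T0 (zl E (rev (map letter u) ++ R)).
Proof.
elim: u R => [//|s u IH] R.
by rewrite iterSr stepE /= mvS mvL IH rev_cons cat_rcons.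
Qed.

Lemma push_one j v L m lj rs0 :
  iter (ssteps t o N (xj j) [::] v + (size v).+3) stp
       (cfg (QPush j) (L, None, nseq m None) (lj, ltm, map letter v ++ None :: rs0)) =
  if pa v (xj j) == xj j then
    cfg (after_rw j) (rev (map letter (sout t o N (xj j) [::] v)) ++ hash :: L, None,
                      nseq (m.-1 - size (sout t o N (xj j) [::] v)) None)
        (lj, ltm, map letter v ++ None :: rs0)
  else cfg (QHalt false) (rev (map letter (sout t o N (xj j) [::] v)) ++ hash :: L, None,
                      nseq (m.-1 - size (sout t o N (xj j) [::] v)) None)
        (rev (map letter v) ++ ltm :: lj, None, rs0).
Proof.
have -> : ssteps t o N (xj j) [::] v + (size v).+3 =
          (size v).+2 + (ssteps t o N (xj j) [::] v).+1 by lia.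
rewrite iterD (iterSr (ssteps t o N (xj j) [::] v)) stepE /= mvR mvR zr_nseq.
have := @sweep v j (xj j) bnil (hash :: L) m.-1 (ltm :: lj) rs0 HN.
move=> /= ->.
rewrite send_pact /=.
case: ifP => _; last by rewrite halt_fix.
rewrite iterS iterSr stepE /= mvS' mvL -(map_rev letter v).
have := rewind (rev v) (ltm :: lj) (None :: rs0) j
  (rev (map letter (sout t o N (xj j) [::] v)) ++ hash :: L, None,
   nseq (m.-1 - size (sout t o N (xj j) [::] v)) None).
rewrite size_rev => ->.
by rewrite stepE /= mvS' map_rev revK.
Qed.


Definition ex : seq X := enum X.
Lemma size_ex : size ex = #|X|.
Proof. by rewrite /ex cardE. Qed.
Lemma drop_enum (j : 'I_#|X|) : drop j ex = xj j :: drop j.+1 ex.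
Proof. by rewrite /xj (enum_val_nth (enum_val j)) -drop_nth // size_ex. Qed.

Lemma after_rw_last (j : 'I_#|X|) : #|X| = j.+1 -> after_rw j = QPS.
Proof. by move=> H; rewrite /after_rw insubF //; apply/negbTE; rewrite -leqNgt; lia. Qed.

Lemma after_rw_next (j : 'I_#|X|) : j.+1 < #|X| ->
  exists j' : 'I_#|X|, val j' = j.+1 /\ after_rw j = QPush j'.
Proof. by move=> H; exists (Ordinal H); split => //; rewrite /after_rw (insubT (fun n => n < #|X|) H). Qed.

Lemma push_all v lj rs0 k : forall (j : 'I_#|X|) L m, #|X| = j + k.+1 ->
  let xs := drop j ex in
  let c := cfg (QPush j) (L, None, nseq m None) (lj, ltm, map letter v ++ None :: rs0) in
  let n := \sum_(x <- xs) (ssteps t o N x [::] v + (size v).+3) in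
  if all (fun x => pa v x == x) xs then
    exists m', iter n stp c =
      cfg QPS (rev (enc [seq sout t o N x [::] v | x <- xs]) ++ L, None, nseq m' None)
          (lj, ltm, map letter v ++ None :: rs0)
  else exists n' T0 T1, n' <= n /\ iter n' stp c = cfg (QHalt false) T0 T1.
Proof.
elim: k => [|k IH] j L m Hj /=; rewrite drop_enum big_cons /=.
- have Hd : drop j.+1 ex = [::].
    by apply: drop_oversize; rewrite size_ex; lia.
  rewrite Hd big_nil addn0 andbT push_one.
  case Hc: (pa v (xj j) == xj j).
    rewrite after_rw_last; last lia; exists (m.-1 - size (sout t o N (xj j) [::] v)).
    by rewrite rev_enc1 map_rev -catA.
  exists (ssteps t o N (xj j) [::] v + (size v).+3); do 2 eexists; split; first exact: leqnn.
  by rewrite push_one Hc.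
- have [j' [Hj' Hr]] : exists j' : 'I_#|X|, val j' = j.+1 /\ after_rw j = QPush j'.
    by apply: after_rw_next; lia.
  have Hj2 : #|X| = j' + k.+1 by rewrite Hj'; lia.
  have := IH j' (rev (map letter (sout t o N (xj j) [::] v)) ++ hash :: L)
    (m.-1 - size (sout t o N (xj j) [::] v)) Hj2.
  rewrite /= Hj' => IHj.
  rewrite addnC iterD push_one.
  case Hc: (pa v (xj j) == xj j) => /=.
    move: IHj; case: ifP => Ha.
      move=> [m' Hm']; exists m'; rewrite Hr Hm'; congr cfg; congr (_, _, _).
      by rewrite rev_enc_cons map_rev -!catA.
    move=> [n' [T0 [T1 [Hn' He]]]]; exists (n' + (ssteps t o N (xj j) [::] v + (size v).+3)).
    exists T0, T1; split; first by rewrite leq_add2r.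
    by rewrite iterD push_one Hc Hr.
  exists (ssteps t o N (xj j) [::] v + (size v).+3); do 2 eexists.
  by split; [rewrite leq_addl | rewrite push_one Hc].
Qed.


Lemma halted_halt b T0 T1 : halted (cfg (QHalt b) T0 T1).
Proof. by rewrite /halted /cfg. Qed.
Lemma acc_halt b T0 T1 : acc (cfg (QHalt b) T0 T1).1 = b.
Proof. by rewrite /cfg. Qed.

Lemma arith a q r O : r < N -> O <= (N-1)*q + a*r ->
  7*a + 2 + ((3*a+1) + ((3*a+1)*N + N + 1)*a)*N <= q ->
  (q*N + r) + 2 + a*(3*(q*N+r) + 5) + ((3*a+1)*N + N + 1)*O + a*2 <= ((3*a+1)*N + N)*(q*N+r) + 2.
Proof.
move: HN; case: N => // N' _; rewrite subSS subn0 => Hr HO Hq.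
move: Hq; set C := (3*a+1)*N'.+1 + N'.+1 => Hq.
have E1 : (C + 1)*O <= (C + 1)*(N'*q) + (C + 1)*(a*r).
  by rewrite -mulnDr leq_mul2l HO orbT.
have E3 : (3*a+1)*r + (C + 1)*(a*r) <= ((3*a+1) + (C + 1)*a)*N'.+1.
  by rewrite mulnA -mulnDl leq_mul2l ltnW ?orbT.
have E2 : C * (q*N'.+1) = (C+1)*(N'*q) + q*((3*a+1)*N'.+1 + 1).
  rewrite /C; lia.
move: E1 E2 E3 Hq; move: C => C; lia.
Qed.

Hypothesis Hinv : invertible_aut o.
Hypothesis Hsc : forall w : seq S, N <= size w -> \sum_(x : X) word_len t o (sec w x) < size w.
Definition Cc := (3 * #|X| + 1) * N + N.
Hypothesis HK : (7 * #|X| + 2 + ((3 * #|X| + 1) + (Cc + 1) * #|X|) * N) * N <= K.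

Definition pot (st : seq (seq S)) : nat := \sum_(v <- st) (Cc * size v + 2).
Definition Good (st : seq (seq S)) : Prop := forall v, v \in st -> word_problem t o v.

Lemma long_cost v : K < size v ->
  (size v).+2 + \sum_(x <- ex) (ssteps t o N x [::] v + (size v).+3)
   + pot [seq sout t o N x [::] v | x <- ex] <= Cc * size v + 2.
Proof.
move=> Hv.
rewrite /pot big_map /ex !big_enum /=.
have H1 : \sum_(x in X) (ssteps t o N x [::] v + (size v).+3) <=
          \sum_(x in X) (3 * size v + 5 + size (sout t o N x [::] v)).
  apply: leq_sum => x _; have := ssteps_le t o N x [::] v; lia.
have H2 : \sum_(x in X) (3 * size v + 5 + size (sout t o N x [::] v)) =
          #|X| * (3 * size v + 5) + \sum_(x in X) size (sout t o N x [::] v).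
  by rewrite big_split sum_nat_const.
have H3 : \sum_(x in X) (Cc * size (sout t o N x [::] v) + 2) =
          Cc * \sum_(x in X) size (sout t o N x [::] v) + #|X| * 2.
  by rewrite big_split sum_nat_const big_distrr.
have H4 := @sout_bound S X t o N Hinv HN Hsc v [::] id (fun x y (H : id x = id y) => H) HN.
rewrite /= add0n in H4.
have H5 : \sum_(x in X) size (sout t o N x [::] v) = \sum_(x : X) size (sout t o N x [::] v).
  by [].
have Hq : 7 * #|X| + 2 + ((3 * #|X| + 1) + (Cc + 1) * #|X|) * N <= size v %/ N.
  by rewrite leq_divRL //; apply: leq_trans HK _; exact: ltnW.
have Hr : size v %% N < N by rewrite ltn_mod.
have := arith Hr H4 Hq.
rewrite -/Cc -(divn_eq (size v) N).
move=> Ha; rewrite H3; apply: (leq_trans (leq_add (leq_add (leqnn _) H1) (leqnn _))); rewrite H2 H5; set a := #|X| in Ha *; lia.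
Qed.


Lemma pot_rcons st v : pot (rcons st v) = pot st + (Cc * size v + 2).
Proof. by rewrite /pot -cats1 big_cat big_seq1. Qed.
Lemma pot_cat st st' : pot (st ++ st') = pot st + pot st'.
Proof. by rewrite /pot big_cat. Qed.
Lemma Cc_ge n : n <= Cc * n.
Proof. by apply: leq_pmull; rewrite /Cc addn_gt0 HN orbT. Qed.

Lemma Good_cat a b : Good (a ++ b) <-> Good a /\ Good b.
Proof.
rewrite /Good; split.
  by move=> H; split=> w Hw; apply: H; rewrite mem_cat Hw ?orbT.
by move=> [Ha Hb] w; rewrite mem_cat => /orP [/Ha|/Hb].
Qed.
Lemma Good_rcons a v : Good (rcons a v) <-> word_problem t o v /\ Good a.
Proof.
rewrite -cats1 Good_cat /Good; split=> [[Ha Hv]|[Hv Ha]]; split=> //.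
  by apply: Hv; rewrite mem_head.
by move=> w; rewrite inE => /eqP ->.
Qed.
Lemma Good_map (f : X -> seq S) : Good [seq f x | x <- ex] <-> forall x, word_problem t o (f x).
Proof.
rewrite /Good; split.
  by move=> H x; apply: H; apply: map_f; rewrite /ex mem_enum.
by move=> H w /mapP [x _ ->].
Qed.

Lemma trivial_X0 : #|X| = 0 -> forall v, word_problem t o v.
Proof.
move=> H v [|x u]; first by rewrite word_act_nil.
exfalso; have : 0 < #|X| by apply/card_gt0P; exists x.
by rewrite H.
Qed.

Lemma main_loop P : forall st m (T1 : tp), pot st <= P ->
  exists n, n <= P + 2 /\
   halted (iter n stp (cfg QPS (rev (enc st), None, nseq m None) T1)) /\
   (acc (iter n stp (cfg QPS (rev (enc st), None, nseq m None) T1)).1 <-> Good st).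
Proof.
elim/ltn_ind: P => P IH st m T1 Hpot.
case/lastP: st Hpot => [|st v] Hpot.
  exists 2; split; first lia.
  rewrite pop_empty halted_halt acc_halt; split => //; split => // _ w /=.
rewrite pot_rcons in Hpot.
have Hpw := pop_word st v m T1.
have Hpf := popf_some (rev v) bnil.
rewrite /= size_rev addn0 cats0 revK in Hpf.
have Hcv := Cc_ge (size v).
case Hsz: (size v <= K) in Hpf.
  case Hp: (popf (Some bnil) (rev v)) Hpf => [b'|] //= [Hb'].
  rewrite Hp /after_pop /= Hb' in Hpw.
  case Htb: (tb v) in Hpw.
    have Hv : word_problem t o v by apply/asboolP.
    have Hlt : pot st < P by lia.
    have [n' [Hn' [Hh Ha]]] := IH _ Hlt st (size v + m).+1
       (behead (drop (size v) T1.1.1), ltm, map letter v ++ None :: T1.2) (leqnn _).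
    exists (n' + (size v).+2); split; first lia.
    rewrite iterD Hpw; split => //; rewrite Ha Good_rcons; tauto.
  exists (size v).+2; rewrite Hpw halted_halt acc_halt; split; first lia.
  split => //; split => // /Good_rcons [Hv _].
  by move: Htb; rewrite /tb; move/asboolP: Hv => ->.
case Hp: (popf (Some bnil) (rev v)) Hpf => [b'|] //= _.
rewrite Hp /after_pop in Hpw.
have HvK : K < size v by rewrite ltnNge Hsz.
case Hx: (0 < #|X|).
  pose j0 : 'I_#|X| := Ordinal Hx.
  have Hins : insub 0 = Some j0 := insubT (fun n => n < #|X|) Hx.
  rewrite Hins in Hpw.
  have Hj : #|X| = j0 + (#|X|.-1).+1 by rewrite /= add0n prednK.
  have := push_all v (behead (drop (size v) T1.1.1)) T1.2 (rev (enc st)) (size v + m).+1 Hj.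
  rewrite /= drop0.
  have Hlc := long_cost HvK.
  case Hall: (all (fun x => pa v x == x) ex).
    move=> [m' Hm'].
    have Hlt : pot (st ++ [seq sout t o N x [::] v | x <- ex]) < P by rewrite pot_cat; lia.
    have [n' [Hn' [Hh Ha]]] := IH _ Hlt (st ++ [seq sout t o N x [::] v | x <- ex]) m'
       (behead (drop (size v) T1.1.1), ltm, map letter v ++ None :: T1.2) (leqnn _).
    exists (n' + (\sum_(x <- ex) (ssteps t o N x [::] v + (size v).+3) + (size v).+2)).
    split; first by rewrite pot_cat in Hn'; lia.
    rewrite iterD iterD Hpw Hm' -rev_enc_cat; split => //.
    rewrite Ha Good_cat Good_rcons Good_map.
    have Hvv : word_problem t o v <-> forall x, word_problem t o (sout t o N x [::] v).
      split.
        move=> /wp_iff [_ H] x; apply/(wp_same (sout_same t o N x [::] v)); exact: H.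
      move=> H; apply/wp_iff; split.
        by move=> x; apply/eqP; move/allP: Hall; apply; rewrite /ex mem_enum.
      by move=> x; apply/(wp_same (sout_same t o N x [::] v)).
    by rewrite Hvv; tauto.
  move=> [n' [T0 [T1'' [Hn' Hit]]]].
  exists (n' + (size v).+2); split; first lia.
  rewrite iterD Hpw Hit halted_halt acc_halt; split => //; split => // /Good_rcons [Hv _].
  move: Hall; rewrite (_ : all _ _ = true) //; apply/allP => x _; apply/eqP.
  by have [H _] := (wp_iff t o v).1 Hv; apply: H.
rewrite insubF in Hpw; last by rewrite Hx.
have Hv : word_problem t o v by apply: trivial_X0; move: Hx; rewrite lt0n => /negbFE /eqP.
have Hlt : pot st < P by lia.
have [n' [Hn' [Hh Ha]]] := IH _ Hlt st (size v + m).+1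
   (behead (drop (size v) T1.1.1), ltm, map letter v ++ None :: T1.2) (leqnn _).
exists (n' + (size v).+2); split; first lia.
rewrite iterD Hpw; split => //; rewrite Ha Good_rcons; tauto.
Qed.

End Machine.


Theorem mainTheorem8 (S X : finType) (t : S -> X -> S) (o : S -> X -> X) :
  invertible_aut o -> minimal_aut t o -> closed_under_inversion t o ->
  strongly_contracting_aut t o ->
  DTIME_lin (word_problem t o).
Proof.
move=> Hinv _ _ [N0 HN0].
pose N := N0.+1.
have HN : 0 < N by [].
have Hsc : forall w : seq S, N <= size w -> \sum_(x : X) word_len t o (section t o w x) < size w.
  by move=> w Hw; apply: HN0; apply: ltnW.
pose K := (7 * #|X| + 2 + (3 * #|X| + 1 + (Cc X N + 1) * #|X|) * N) * N.
have HK : (7 * #|X| + 2 + (3 * #|X| + 1 + (Cc X N + 1) * #|X|) * N) * N <= K by [].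
have HNK : N <= K by rewrite /K; apply: leq_pmull; lia.
have Hg : forall b y, size b = N -> size (geo t o (section t o b y)) <= K.
  by move=> b y Hb; apply: leq_trans HNK; apply: ltnW; apply: geo_small.
exists (Mach t o N K), (Cc X N + 7) => w.
have [n' [Hn' [Hh Ha]]] := main_loop HNK HN Hg Hinv Hsc HK 0 ([::], None, [::]) (leqnn (pot X N [:: w])).
exists (n' + (size w).+3); split.
  move: Hn'; rewrite /pot big_seq1 => Hn'.
  have : size w <= Cc X N * size w by apply: leq_pmull; rewrite /Cc addn_gt0 orbT.
  lia.
have E : iter (n' + (size w).+3) (tm_step (M:=Mach t o N K)) (init_config (Mach t o N K) w) =
         iter n' (stp (K:=K)) (cfg t o N QPS (rev (enc [:: w]), None, nseq 0 None) ([::], None, [::])).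
  by rewrite iterD init_run rev_enc1 map_rev.
rewrite /= E; split => //.
change (acc (iter n' (stp (K:=K)) (cfg t o N QPS (rev (enc [:: w]), None, nseq 0 None) ([::], None, [::]))).1
  <-> word_problem t o w).
rewrite Ha; split => [H|H v]; first by apply: H; rewrite mem_head.
by rewrite inE => /eqP ->.
Qed.
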